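(* Let $\mathfrak f$ be the free complex Lie algebra on $m$ generators $x_1,\dots,x_m$, $V=\langle x_1,\dots,x_m\rangle$, $\mathfrak f=\bigoplus_{n\ge1}\mathfrak f_n$ its degree decomposition, and $\mathfrak f_{\ge k}=\bigoplus_{n\ge k}\mathfrak f_n$. (1) If $\mathfrak h\subset\mathfrak f$ is a verbal ideal containing $\mathfrak f_{\ge\nu+1}$, then the ideal $\mathfrak h/\mathfrak f_{\ge\nu+1}\subset\mathfrak f/\mathfrak f_{\ge\nu+1}=\mathfrak n_{m,\nu}$ is $\mathrm{GL}(V)$-invariant. (2) If all multiplicities $m_\lambda$ in the decomposition $\mathfrak f/\mathfrak f_{\ge\nu+1}=\bigoplus m_\lambda V_\lambda$ into irreducible $\mathrm{GL}(V)$-representations are at most $1$, then there are only finitely many verbal ideals $\mathfrak h\subset\mathfrak f$ containing $\mathfrak f_{\ge\nu+1}$. (3) The verbal ideals $\mathfrak h\subset\mathfrak f$ with $\mathfrak f_{\ge\nu+1}\subset\mathfrak h\subset\mathfrak f_{\ge\nu}$ are precisely the ideals of the form $U\oplus\mathfrak f_{\ge\nu+1}$ with $U$ a $\mathrm{GL}(V)$-invariant subspace of $\mathfrak f_\nu$.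
   Context: An ideal $\mathfrak h$ of $\mathfrak f$ is verbal if $\varphi(\mathfrak h)\subset\mathfrak h$ for every Lie algebra endomorphism $\varphi$ of $\mathfrak f$. $\mathrm{GL}(V)$ acts on $\mathfrak f$ by extending linear automorphisms of $V$ to Lie algebra automorphisms; this preserves each $\mathfrak f_n$. $V_\lambda$ denotes the irreducible polynomial $\mathrm{GL}(V)$-representation of highest weight $\lambda$. $\mathfrak n_{m,\nu}$ is the free $\nu$-step nilpotent Lie algebra on $m$ generators. *)

(* Defs.v *)
From HB Require Import structures.
From mathcomp Require Import all_boot all_algebra.
From mathcomp Require Import complex.
From mathcomp Require Import reals Rstruct.
Set Implicit Arguments.
Unset Strict Implicit.
Unset Printing Implicit Defensive.
Import GRing.Theory.
Local Open Scope ring_scope.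

Notation C := (Rdefinitions.R)[i].

(* Words in the letters x_1, ..., x_m and (noncommutative formal) series
   sum_w a(w) w over C: the free associative algebra C<<x_1..x_m>> (completed).
   The free Lie algebra is realised as the Lie subalgebra generated by the
   x_i (it consists of polynomials). *)
Definition word (m : nat) := seq 'I_m.
Definition series (m : nat) := word m -> C.

Definition szero (m : nat) : series m := fun _ => 0.
Definition sadd (m : nat) (a b : series m) : series m := fun w => a w + b w.
Definition sscale (m : nat) (c : C) (a : series m) : series m := fun w => c * a w.
Definition ssub (m : nat) (a b : series m) : series m := fun w => a w - b w.
Definition smul (m : nat) (a b : series m) : series m :=
  fun w => \sum_(i < (size w).+1) a (take i w) * b (drop i w).
Definition sbr (m : nat) (a b : series m) : series m := ssub (smul a b) (smul b a).
Definition sgen (m : nat) (i : 'I_m) : series m :=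
  fun w => if w == [:: i] then 1 else 0.

Inductive free_lie (m : nat) : series m -> Prop :=
| fl_gen (i : 'I_m) : free_lie (sgen i)
| fl_zero : free_lie (@szero m)
| fl_add (a b : series m) : free_lie a -> free_lie b -> free_lie (sadd a b)
| fl_scale (c : C) (a : series m) : free_lie a -> free_lie (sscale c a)
| fl_br (a b : series m) : free_lie a -> free_lie b -> free_lie (sbr a b).

Definition psubset (m : nat) (S T : series m -> Prop) := forall a, S a -> T a.

Definition fdeg (m n : nat) (a : series m) : Prop :=
  free_lie a /\ forall w : word m, size w != n -> a w = 0.

Definition fge (m k : nat) (a : series m) : Prop :=
  free_lie a /\ forall w : word m, (size w < k)%N -> a w = 0.

(* (+)_{n <= nu} f_n, the canonical graded model of f / f_{>= nu+1} *)
Definition ftrunc (m nu : nat) (a : series m) : Prop :=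
  free_lie a /\ forall w : word m, (nu < size w)%N -> a w = 0.

Definition is_subspace (m : nat) (S : series m -> Prop) : Prop :=
  [/\ S (@szero m),
      forall a b, S a -> S b -> S (sadd a b)
    & forall c a, S a -> S (sscale c a)].

Definition is_ideal (m : nat) (h : series m -> Prop) : Prop :=
  [/\ is_subspace h, psubset h (@free_lie m)
    & forall a b, free_lie a -> h b -> h (sbr a b)].

Definition lie_endo (m : nat) (phi : series m -> series m) : Prop :=
  [/\ forall a, free_lie a -> free_lie (phi a),
      forall a b, free_lie a -> free_lie b -> phi (sadd a b) = sadd (phi a) (phi b),
      forall c a, free_lie a -> phi (sscale c a) = sscale c (phi a)
    & forall a b, free_lie a -> free_lie b -> phi (sbr a b) = sbr (phi a) (phi b)].

Definition verbal (m : nat) (h : series m -> Prop) : Prop :=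
  is_ideal h /\ forall phi, lie_endo phi -> forall a, h a -> h (phi a).

(* GL(V) acting on C<<x>> by the algebra automorphism extending
   x_i |-> sum_j g_(j,i) x_j ; coefficientwise:
   (g.a)(w) = sum_{|u| = |w|} a(u) prod_k g_(w_k, u_k). *)
Definition gl_act (m : nat) (g : 'M[C]_m) (a : series m) : series m :=
  fun w => \sum_(u : (size w).-tuple 'I_m)
             a (tval u) * \prod_(k < size w) g (tnth (in_tuple w) k) (tnth u k).

Definition gl_invariant (m : nat) (S : series m -> Prop) : Prop :=
  forall g : 'M[C]_m, g \in unitmx -> forall a, S a -> S (gl_act g a).

Definition gl_irreducible (m : nat) (W : series m -> Prop) : Prop :=
  [/\ is_subspace W, gl_invariant W, (exists2 a, W a & a <> @szero m)
    & forall U, is_subspace U -> gl_invariant U -> psubset U W ->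
        psubset U (fun a => a = @szero m) \/ psubset W U].

Definition gl_isomorphic (m : nat) (W1 W2 : series m -> Prop) : Prop :=
  exists phi : series m -> series m,
   [/\ forall a, W1 a -> W2 (phi a),
       forall a b, W1 a -> W1 b -> phi (sadd a b) = sadd (phi a) (phi b),
       forall c a, W1 a -> phi (sscale c a) = sscale c (phi a),
       (forall a b, W1 a -> W1 b -> phi a = phi b -> a = b) /\
       (forall b, W2 b -> exists2 a, W1 a & phi a = b)
     & forall g : 'M[C]_m, g \in unitmx -> forall a, W1 a ->
         phi (gl_act g a) = gl_act g (phi a)].

(* M decomposes as a direct sum of irreducible GL(V)-representations,
   no two of which are isomorphic (all multiplicities m_lambda <= 1). *)
Definition multiplicity_free (m : nat) (M : series m -> Prop) : Prop :=
  exists (k : nat) (W : 'I_k -> series m -> Prop),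
   [/\ forall i, gl_irreducible (W i) /\ psubset (W i) M,
       forall t, M t -> (exists2 ws : 'I_k -> series m,
           (forall i, W i (ws i)) & t = \big[@sadd m/@szero m]_(i < k) ws i),
       forall ws : 'I_k -> series m, (forall i, W i (ws i)) ->
           \big[@sadd m/@szero m]_(i < k) ws i = @szero m -> forall i, ws i = @szero m
     & forall i j, i != j -> ~ gl_isomorphic (W i) (W j)].

(* Main.v *)
Require Import Defs.
From HB Require Import structures.
From mathcomp Require Import all_boot all_algebra.
From mathcomp Require Import complex.
From mathcomp Require Import reals Rstruct.
From mathcomp Require Import zify.
From Stdlib Require Import FunctionalExtensionality ClassicalEpsilon Classical.
Set Implicit Arguments.
Unset Strict Implicit.
Unset Printing Implicit Defensive.
Import GRing.Theory.
Local Open Scope ring_scope.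

Ltac sext := apply: functional_extensionality => ?.

Section Gen.
Variable (R : comNzRingType) (m : nat) (M : 'M[R]_m).

Fixpoint glr (a : word m -> R) (w : word m) : R :=
  match w with
  | [::] => a [::]
  | x :: w' => \sum_(j < m) M x j * glr (fun v => a (j :: v)) w'
  end.

Lemma glr_vanish (w : word m) : forall a : word m -> R,
  (forall v : word m, size v = size w -> a v = 0) -> glr a w = 0.
Proof.
elim: w => [|x w IH] a H /=; first by apply: H.
rewrite big1 // => j _; rewrite IH ?mulr0 // => v Hv; apply: H => /=; by rewrite Hv.
Qed.

Lemma glr_ext (w : word m) : forall a b : word m -> R,
  (forall v, a v = b v) -> glr a w = glr b w.
Proof.
elim: w => [|x w IH] a b H /=; first by apply: H.
by apply: eq_bigr => j _; rewrite (IH _ (fun v => b (j :: v))).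
Qed.

End Gen.

Lemma glr_morph (R : comNzRingType) m (M : 'M[R]_m) (S : comNzRingType) (f : {rmorphism R -> S}) (w : word m) :
  forall a : word m -> R, f (glr M a w) = glr (map_mx f M) (fun v => f (a v)) w.
Proof.
elim: w => [|x w IH] a //=.
rewrite rmorph_sum; apply: eq_bigr => j _; by rewrite rmorphM IH mxE.
Qed.

Lemma tuple_sum_cons (T : finType) (S : nmodType) n (F : n.+1.-tuple T -> S) :
  \sum_(u : n.+1.-tuple T) F u = \sum_(j : T) \sum_(u : n.-tuple T) F [tuple of j :: u].
Proof.
rewrite pair_big /=.
rewrite (reindex (fun p : T * n.-tuple T => [tuple of p.1 :: p.2])) //=.
exists (fun u : n.+1.-tuple T => (thead u, [tuple of behead u])).
  by move=> [x t] _ /=; rewrite theadE; congr pair; apply: val_inj.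
by move=> u _ /=; rewrite [RHS]tuple_eta.
Qed.

Lemma gl_actE m (g : 'M[C]_m) a w : gl_act g a w = glr g a w.
Proof.
elim: w a => [|x w IH] a.
  rewrite /gl_act /= (eq_bigr (fun _ => a [::])); last first.
    by move=> u _; rewrite big_ord0 mulr1 (tuple0 u).
  by rewrite sumr_const card_tuple expn0.
rewrite /gl_act /= tuple_sum_cons; apply: eq_bigr => j _.
rewrite -IH /gl_act mulr_sumr; apply: eq_bigr => u _.
rewrite big_ord_recl /= mulrCA; congr (_ * (_ * _)).
apply: eq_bigr => i _; congr (g _ _).
  by rewrite !(tnth_nth x) /=.
by rewrite !(tnth_nth j) /=.
Qed.


Section Ser.
Variable m : nat.
Implicit Types a b : series m.

Lemma saddA : associative (@sadd m).
Proof. by move=> a b c; sext; rewrite /sadd addrA. Qed.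
Lemma saddC : commutative (@sadd m).
Proof. by move=> a b; sext; rewrite /sadd addrC. Qed.
Lemma add0s : left_id (@szero m) (@sadd m).
Proof. by move=> a; sext; rewrite /sadd /szero add0r. Qed.
End Ser.

HB.instance Definition _ m := Monoid.isComLaw.Build (series m) (@szero m) (@sadd m)
  (@saddA m) (@saddC m) (@add0s m).

Section Ser2.
Variable m : nat.
Implicit Types a b : series m.

Lemma bigsE (I : Type) (r : seq I) (P : pred I) (F : I -> series m) w :
  (\big[@sadd m/@szero m]_(i <- r | P i) F i) w = \sum_(i <- r | P i) F i w.
Proof. by apply: (big_morph (fun s : series m => s w)). Qed.

Lemma glr_add (M : 'M[C]_m) w : forall a b, glr M (sadd a b) w = glr M a w + glr M b w.
Proof.
elim: w => [|x w IH] a b //=.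
rewrite -big_split /=; apply: eq_bigr => j _.
by rewrite -mulrDr -IH; congr (_ * _); apply: glr_ext.
Qed.

Lemma glr_scale (M : 'M[C]_m) w : forall c a, glr M (sscale c a) w = c * glr M a w.
Proof.
elim: w => [|x w IH] c a //=.
rewrite mulr_sumr; apply: eq_bigr => j _.
by rewrite [RHS]mulrCA -[in RHS]IH.
Qed.

Lemma glr_zero (M : 'M[C]_m) w : glr M (@szero m) w = 0.
Proof. by apply: glr_vanish. Qed.

Lemma glr_big (M : 'M[C]_m) (I : Type) (r : seq I) (P : pred I) (F : I -> series m) w :
  glr M (\big[@sadd m/@szero m]_(i <- r | P i) F i) w = \sum_(i <- r | P i) glr M (F i) w.
Proof.
apply: (big_morph (fun s : series m => glr M s w)).
  by move=> a b; rewrite glr_add.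
by rewrite glr_zero.
Qed.

Lemma smul_cons a b j (v : word m) :
  smul a b (j :: v) = a [::] * b (j :: v) + \sum_(i < (size v).+1) a (j :: take i v) * b (drop i v).
Proof. by rewrite /smul /= big_ord_recl /=. Qed.

Lemma glr_mul (M : 'M[C]_m) w : forall a b,
  glr M (smul a b) w = smul (glr M a) (glr M b) w.
Proof.
elim: w => [|x w IH] a b.
  by rewrite /smul /= big_ord_recl big_ord0 addr0.
rewrite [RHS]smul_cons /=.
rewrite (eq_bigr (fun j => M x j * (glr M (smul (fun v => a (j :: v)) b) w
     + a [::] * glr M (fun v => b (j :: v)) w))); last first.
  move=> j _; congr (_ * _); rewrite -glr_scale -glr_add; apply: glr_ext => v.
  by rewrite /sadd /sscale smul_cons addrC.
under eq_bigr do rewrite mulrDr.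
rewrite big_split /= addrC; congr (_ + _).
  by rewrite mulr_sumr; apply: eq_bigr => j _; rewrite mulrCA.
under eq_bigr do rewrite IH /smul mulr_sumr.
rewrite exchange_big /=; apply: eq_bigr => i _.
rewrite mulr_suml; apply: eq_bigr => j _; by rewrite mulrA.
Qed.

Lemma glr_sbr (M : 'M[C]_m) a b w :
  glr M (sbr a b) w = sbr (glr M a) (glr M b) w.
Proof.
rewrite /sbr /ssub.
have -> : (fun w => smul a b w - smul b a w) = sadd (smul a b) (sscale (-1) (smul b a)).
  by sext; rewrite /sadd /sscale mulN1r.
by rewrite glr_add glr_scale !glr_mul mulN1r.
Qed.

Lemma glr_sgen (M : 'M[C]_m) i w :
  glr M (sgen i) w = \sum_(j < m) M j i * sgen j w.
Proof.
case: w => [|x w] /=.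
  by rewrite /sgen /= big1 // => j _; rewrite mulr0.
have E : forall j, glr M (fun v => sgen i (j :: v)) w =
   (if (j == i) && (w == [::]) then 1 else 0).
  move=> j; case: w => [|y w] /=.
    by rewrite /sgen /= eqseq_cons andbT.
  rewrite /= andbF big1 // => j0 _; rewrite glr_vanish ?mulr0 // => v _.
  by rewrite /sgen eqseq_cons andbF.
under eq_bigr do rewrite E.
rewrite (bigD1 i) //= eqxx big1 ?addr0; last first.
  by move=> j /negPf ->; rewrite /= mulr0.
rewrite (bigD1 x) //= /sgen eqseq_cons eqxx /= big1 ?addr0; last first.
  move=> j /negPf jx; by rewrite eqseq_cons eq_sym jx /= mulr0.
by [].
Qed.

End Ser2.


Section FL.
Variable m : nat.
Implicit Types a b : series m.

Lemma ssubE a b : ssub a b = sadd a (sscale (-1) b).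
Proof. by sext; rewrite /ssub /sadd /sscale mulN1r. Qed.

Lemma fl_sub a b : free_lie a -> free_lie b -> free_lie (ssub a b).
Proof. by move=> ha hb; rewrite ssubE; apply: fl_add => //; apply: fl_scale. Qed.

Lemma fl_big (I : Type) (r : seq I) (P : pred I) (F : I -> series m) :
  (forall i, P i -> free_lie (F i)) -> free_lie (\big[@sadd m/@szero m]_(i <- r | P i) F i).
Proof. move=> H; apply: big_ind => //; [exact: fl_zero | exact: fl_add]. Qed.

Lemma fl_nil a : free_lie a -> a [::] = 0.
Proof.
elim => [i||a' b' _ Ha _ Hb|c a' _ Ha|a' b' _ Ha _ Hb] //=.
- by rewrite /sadd Ha Hb addr0.
- by rewrite /sscale Ha mulr0.
- by rewrite /sbr /ssub /smul /= !big_ord_recl !big_ord0 /= Ha Hb !mulr0 !addr0 subrr.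
Qed.

Lemma glr_fun_gen (M : 'M[C]_m) i :
  glr M (sgen i) = \big[@sadd m/@szero m]_(j < m) sscale (M j i) (sgen j).
Proof. by sext; rewrite glr_sgen bigsE. Qed.

Lemma fl_glr (M : 'M[C]_m) a : free_lie a -> free_lie (glr M a).
Proof.
elim => [i||a' b' _ Ha _ Hb|c a' _ Ha|a' b' _ Ha _ Hb].
- rewrite glr_fun_gen; apply: fl_big => j _; apply: fl_scale; apply: fl_gen.
- have -> : glr M (@szero m) = @szero m by sext; rewrite glr_zero.
  exact: fl_zero.
- have -> : glr M (sadd a' b') = sadd (glr M a') (glr M b') by sext; rewrite glr_add.
  exact: fl_add.
- have -> : glr M (sscale c a') = sscale c (glr M a') by sext; rewrite glr_scale.
  exact: fl_scale.
- have -> : glr M (sbr a' b') = sbr (glr M a') (glr M b') by sext; rewrite glr_sbr.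
  exact: fl_br.
Qed.

Lemma gl_act_glr (g : 'M[C]_m) a : gl_act g a = glr g a.
Proof. by sext; rewrite gl_actE. Qed.

Lemma lie_endo_gl (g : 'M[C]_m) : lie_endo (gl_act g).
Proof.
split=> [a ha|a b _ _|c a _|a b _ _]; rewrite !gl_act_glr.
- exact: fl_glr.
- by sext; rewrite glr_add.
- by sext; rewrite glr_scale.
- by sext; rewrite glr_sbr.
Qed.

Definition scomp (n : nat) a : series m := fun w => if size w == n then a w else 0.

Lemma sum_ord_eq (n k : nat) (F : nat -> C) :
  \sum_(i < n.+1) (if k == i then F (i : nat) else 0) = if (k < n.+1)%N then F k else 0.
Proof.
case: ltnP => hk.
  rewrite (bigD1 (Ordinal hk)) //= eqxx big1 ?addr0 // => i /eqP hi.
  case: eqP => // E; case: hi; apply: val_inj => /=; by rewrite E.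
rewrite big1 // => i _; case: eqP => // E.
by move: (ltn_ord i); rewrite -E ltnNge hk.
Qed.

Lemma sum_ord_eqc (n k : nat) (c : C) :
  \sum_(i < n.+1) (if k == i then c else 0) = if (k < n.+1)%N then c else 0.
Proof. exact: (sum_ord_eq n k (fun _ => c)). Qed.

Lemma comp_smul n a b :
  scomp n (smul a b) = \big[@sadd m/@szero m]_(i < n.+1) smul (scomp i a) (scomp (n - i) b).
Proof.
apply: functional_extensionality => w; rewrite bigsE /scomp /smul exchange_big /=.
have sz : forall j : 'I_(size w).+1, size (take j w) = j.
  by move=> j; rewrite size_take_min; apply/minn_idPl; rewrite -ltnS.
under [RHS]eq_bigr => j _.
  under eq_bigr => i _ do rewrite sz size_drop.
  have -> : \sum_(i < n.+1) (if (j : nat) == i then a (take j w) else 0) *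
          (if (size w - j)%N == (n - i)%N then b (drop j w) else 0)
      = \sum_(i < n.+1) (if (j : nat) == i then a (take j w) *
          (if (size w - j)%N == (n - j)%N then b (drop j w) else 0) else 0).
    by apply: eq_bigr => i _; case: eqP => [->|]; rewrite ?mul0r.
  rewrite sum_ord_eqc.
over.
case: eqP => Hw.
  apply: eq_bigr => j _; have hj : (j < n.+1)%N by rewrite -Hw ltn_ord.
  by rewrite hj; have -> : ((size w - j)%N == (n - j)%N) = true by apply/eqP; lia.
rewrite big1 // => j _; case: ifP => // hj; case: eqP; rewrite ?mulr0 //.
move: (ltn_ord j) hj => h1 h2 h3; exfalso; apply: Hw; lia.
Qed.

Lemma comp_sgen n i : scomp n (sgen i) = if n == 1%N then sgen i else @szero m.
Proof.
apply: functional_extensionality => w; rewrite /scomp /sgen /szero.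
case: (n =P 1%N) => [->|Hn] /=; case: (w =P [:: i]) => [->|_] //=; try by case: ifP.
by case: eqP => // E; case: Hn.
Qed.

Lemma comp_add n a b : scomp n (sadd a b) = sadd (scomp n a) (scomp n b).
Proof. by sext; rewrite /scomp /sadd; case: ifP; rewrite ?addr0. Qed.
Lemma comp_scale n c a : scomp n (sscale c a) = sscale c (scomp n a).
Proof. by sext; rewrite /scomp /sscale; case: ifP; rewrite ?mulr0. Qed.
Lemma comp_zero n : scomp n (@szero m) = @szero m.
Proof. by sext; rewrite /scomp /szero; case: ifP. Qed.
Lemma comp_sub n a b : scomp n (ssub a b) = ssub (scomp n a) (scomp n b).
Proof. by sext; rewrite /scomp /ssub; case: ifP; rewrite ?subr0. Qed.

Lemma comp_sbr n a b :
  scomp n (sbr a b) = \big[@sadd m/@szero m]_(i < n.+1) sbr (scomp i a) (scomp (n - i) b).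
Proof.
rewrite /sbr comp_sub !comp_smul; apply: functional_extensionality => w.
rewrite /ssub !bigsE /ssub sumrB; congr (_ - _).
rewrite (reindex_inj rev_ord_inj) /=; apply: eq_bigr => i _.
by rewrite subKn // -ltnS.
Qed.

Lemma fl_comp a n : free_lie a -> free_lie (scomp n a).
Proof.
move=> ha; elim: ha n => [i||a' b' _ Ha _ Hb|c a' _ Ha|a' b' _ Ha _ Hb] n.
- by rewrite comp_sgen; case: eqP => _; [apply: fl_gen | apply: fl_zero].
- by rewrite comp_zero; apply: fl_zero.
- by rewrite comp_add; apply: fl_add.
- by rewrite comp_scale; apply: fl_scale.
- by rewrite comp_sbr; apply: fl_big => i _; apply: fl_br.
Qed.

Lemma fl_bound a : free_lie a -> exists N, forall w : word m, (N < size w)%N -> a w = 0.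
Proof.
elim => [i||a' b' _ [Na Ha] _ [Nb Hb]|c a' _ [Na Ha]|a' b' _ [Na Ha] _ [Nb Hb]].
- exists 1%N => w hw; rewrite /sgen; case: eqP => // E; by rewrite E in hw.
- by exists 0%N.
- exists (maxn Na Nb) => w hw; rewrite /sadd Ha ?Hb ?addr0 //.
    by apply: leq_ltn_trans hw; rewrite leq_maxr.
  by apply: leq_ltn_trans hw; rewrite leq_maxl.
- by exists Na => w hw; rewrite /sscale Ha ?mulr0.
- have key : forall (a1 b1 : series m) Na Nb, (forall w : word m, (Na < size w)%N -> a1 w = 0) ->
      (forall w : word m, (Nb < size w)%N -> b1 w = 0) ->
      forall w : word m, (Na + Nb < size w)%N -> smul a1 b1 w = 0.
    move=> a1 b1 na nb HA HB w hw; rewrite /smul big1 // => j _.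
    case: (ltnP na (size (take j w))) => h1; first by rewrite HA ?mul0r.
    rewrite HB ?mulr0 // size_drop; move: h1; rewrite size_take_min; lia.
  exists (Na + Nb)%N => w hw; rewrite /sbr /ssub (key a' b' Na Nb) //.
  by rewrite (key b' a' Nb Na) ?subr0 // addnC.
Qed.

Lemma comp_decomp a N : (forall w : word m, (N < size w)%N -> a w = 0) ->
  a = \big[@sadd m/@szero m]_(n < N.+1) scomp n a.
Proof.
move=> H; apply: functional_extensionality => w; rewrite bigsE /scomp.
rewrite (eq_bigr (fun i : 'I_N.+1 => if size w == i then a w else 0)) //.
rewrite sum_ord_eqc; case: ltnP => // h; by rewrite H.
Qed.

End FL.

Section Low.
Variable m : nat.
Implicit Types a b : series m.

Definition low d a := forall w : word m, (size w < d)%N -> a w = 0.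
Definition homog d a := forall w : word m, size w != d -> a w = 0.

Lemma ltn_neqn (x y : nat) : (x < y)%N -> x != y.
Proof. by move=> h; rewrite neq_ltn h. Qed.

Lemma homog_comp n a : homog n (scomp n a).
Proof. by move=> w /negPf h; rewrite /scomp h. Qed.

Lemma homog_glr (M : 'M[C]_m) d a : homog d a -> homog d (glr M a).
Proof. by move=> H w hw; apply: glr_vanish => v hv; apply: H; rewrite hv. Qed.

Lemma comp_homog n a : homog n a -> scomp n a = a.
Proof.
move=> H; apply: functional_extensionality => w; rewrite /scomp.
by case: eqP => // /eqP h; rewrite H.
Qed.

Lemma smul_close i k X X' Y Y' :
  low i.+1 (ssub X X') -> low k.+1 (ssub Y Y') -> low i X' -> low k Y' ->
  forall w : word m, (size w < (i + k).+1)%N -> smul X Y w = smul X' Y' w.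
Proof.
move=> HX HY HX' HY' w hw; rewrite /smul; apply: eq_bigr => j _.
have eX : forall t : word m, (size t < i.+1)%N -> X t = X' t.
  by move=> t ht; apply/eqP; rewrite -subr_eq0; apply/eqP; apply: HX.
have eY : forall t : word m, (size t < k.+1)%N -> Y t = Y' t.
  by move=> t ht; apply/eqP; rewrite -subr_eq0; apply/eqP; apply: HY.
have hs : (size (take j w) + size (drop j w) = size w)%N.
  by rewrite -size_cat cat_take_drop.
case: (ltngtP (size (take j w)) i) => h.
- by rewrite eX ?HX' ?mul0r //; apply: ltnW.
- rewrite eY ?HY' ?mulr0 //; lia.
- rewrite eX ?eY //; [lia | by rewrite h].
Qed.

Lemma sbr_close i k X X' Y Y' :
  low i.+1 (ssub X X') -> low k.+1 (ssub Y Y') -> low i X' -> low k Y' ->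
  forall w : word m, (size w < (i + k).+1)%N -> sbr X Y w = sbr X' Y' w.
Proof.
move=> HX HY HX' HY' w hw; rewrite /sbr /ssub (smul_close HX HY) //.
by rewrite (smul_close HY HX) // addnC.
Qed.

Lemma sbr0l b : sbr (@szero m) b = @szero m.
Proof.
apply: functional_extensionality => w.
by rewrite /sbr /ssub /smul /szero !big1 ?subr0 // => j _; rewrite ?mul0r ?mulr0.
Qed.
Lemma sbr0r b : sbr b (@szero m) = @szero m.
Proof.
apply: functional_extensionality => w.
by rewrite /sbr /ssub /smul /szero !big1 ?subr0 // => j _; rewrite ?mul0r ?mulr0.
Qed.

Lemma comp0 a : free_lie a -> scomp 0 a = @szero m.
Proof.
move=> ha; apply: functional_extensionality => w; rewrite /scomp /szero.
by case: eqP => // /size0nil ->; apply: fl_nil.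
Qed.

Lemma glr0 (M : 'M[C]_m) : glr M (@szero m) = @szero m.
Proof. by apply: functional_extensionality => w; rewrite glr_zero. Qed.

Variable phi : series m -> series m.
Hypothesis Hphi : lie_endo phi.

Lemma le_fl a : free_lie a -> free_lie (phi a).
Proof. by case: Hphi => H _ _ _; apply: H. Qed.

Lemma le_zero : phi (@szero m) = @szero m.
Proof.
case: Hphi => _ _ H _.
have E : forall b, sscale 0 b = @szero m.
  by move=> b; apply: functional_extensionality => w; rewrite /sscale mul0r.
by rewrite -(E (@szero m)) H ?E //; apply: fl_zero.
Qed.

Lemma le_add a b : free_lie a -> free_lie b -> phi (sadd a b) = sadd (phi a) (phi b).
Proof. by case: Hphi => _ H _ _; apply: H. Qed.
Lemma le_scale c a : free_lie a -> phi (sscale c a) = sscale c (phi a).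
Proof. by case: Hphi => _ _ H _; apply: H. Qed.
Lemma le_br a b : free_lie a -> free_lie b -> phi (sbr a b) = sbr (phi a) (phi b).
Proof. by case: Hphi => _ _ _ H; apply: H. Qed.

Lemma le_big (I : Type) (r : seq I) (F : I -> series m) :
  (forall i, free_lie (F i)) ->
  phi (\big[@sadd m/@szero m]_(i <- r) F i) = \big[@sadd m/@szero m]_(i <- r) phi (F i).
Proof.
move=> H; elim: r => [|x r IH]; first by rewrite !big_nil le_zero.
rewrite !big_cons le_add ?IH //; apply: fl_big => i _; apply: H.
Qed.

Definition Lmat : 'M[C]_m := \matrix_(j, i) phi (sgen i) [:: j].

Lemma Hlemma d : forall u, free_lie u -> homog d u ->
  low d.+1 (ssub (phi u) (glr Lmat u)).
Proof.
elim/ltn_ind: d => d IH u hu hhu.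
rewrite -(comp_homog hhu).
have zcase : low d.+1 (ssub (phi (@szero m)) (glr Lmat (@szero m))).
  by move=> w _; rewrite le_zero glr0 /ssub /szero subr0.
elim: hu {hhu} => [i||a b ha Ha hb Hb|c a ha Ha|a b ha Ha hb Hb].
- rewrite comp_sgen; case: eqP => hd; last exact: zcase.
  subst d; move=> [|x [|y w]] hw //; rewrite /ssub; apply/eqP; rewrite subr_eq0; apply/eqP.
    rewrite fl_nil; [by rewrite /sgen | apply: le_fl; apply: fl_gen].
  rewrite glr_sgen (bigD1 x) //= /sgen eqxx mulr1 big1 ?addr0.
    by rewrite mxE.
  by move=> j /negPf hj; rewrite eqseq_cons eq_sym hj mulr0.
- by rewrite comp_zero.
- rewrite comp_add le_add; [|exact: fl_comp ha|exact: fl_comp hb]; move=> w hw.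
  move: (Ha w hw) (Hb w hw); rewrite /ssub /sadd glr_add => /eqP; rewrite subr_eq0 => /eqP ->.
  by move/eqP; rewrite subr_eq0 => /eqP ->; rewrite subrr.
- rewrite comp_scale le_scale; last exact: fl_comp ha; move=> w hw.
  move: (Ha w hw); rewrite /ssub /sscale glr_scale => /eqP; rewrite subr_eq0 => /eqP ->.
  by rewrite subrr.
- rewrite comp_sbr le_big => [w hw|i]; last by apply: fl_br; apply: fl_comp.
  rewrite /ssub glr_big bigsE -sumrB big1 // => i _.
  rewrite le_br; try exact: fl_comp.
  rewrite glr_sbr; apply/eqP; rewrite subr_eq0; apply/eqP.
  case: (posnP i) => hi.
    by rewrite hi comp0 // le_zero glr0 !sbr0l.
  case: (posnP (d - i)%N) => hdi.
    by rewrite hdi (comp0 hb) le_zero glr0 !sbr0r.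
  have hid : (i <= d)%N by rewrite -ltnS.
  apply: (@sbr_close i (d - i)%N).
  + apply: IH; [lia | exact: fl_comp | exact: homog_comp].
  + apply: IH; [lia | exact: fl_comp | exact: homog_comp].
  + by move=> v hv; exact: (homog_glr Lmat (@homog_comp i a) (ltn_neqn hv)).
  + by move=> v hv; exact: (homog_glr Lmat (@homog_comp (d - i)%N b) (ltn_neqn hv)).
  + by rewrite subnKC.
Qed.

Lemma phi_low d b : free_lie b -> low d b -> low d (phi b).
Proof.
move=> hb hl; have [N HN] := fl_bound hb.
rewrite (comp_decomp HN) le_big => [w hw|n]; last exact: fl_comp.
rewrite bigsE big1 // => n _.
case: (ltnP n d) => hn.
  have -> : scomp n b = @szero m.
    apply: functional_extensionality => v; rewrite /scomp /szero.
    by case: eqP => // E; apply: hl; rewrite E.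
  by rewrite le_zero.
have H1 := Hlemma (fl_comp n hb) (@homog_comp n b).
have := H1 w (leqW (leq_trans hw hn)); rewrite /ssub => /eqP; rewrite subr_eq0 => /eqP ->.
by rewrite (homog_glr Lmat (@homog_comp n b)) // neq_ltn (leq_trans hw hn).
Qed.

End Low.

Import Num.Theory.

Lemma sub_big m (U : series m -> Prop) (I : Type) (r : seq I) (P : pred I) (F : I -> series m) :
  is_subspace U -> (forall i, P i -> U (F i)) ->
  U (\big[@sadd m/@szero m]_(i <- r | P i) F i).
Proof. by case=> h0 hD _ H; apply: big_ind. Qed.

Lemma char_unit m (L : 'M[C]_m) t :
  ~~ root (char_poly (- L)) t -> (L + t%:M) \in unitmx.
Proof.
move=> hr; rewrite unitmxE unitfE.
have -> : L + t%:M = map_mx (horner_eval t) (char_poly_mx (- L)).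
  apply/matrixP => i j; rewrite !mxE /horner_eval.
  rewrite !hornerE /=.
  by rewrite hornerMn hornerX opprK addrC.
by rewrite det_map_mx.
Qed.

Lemma natC_inj : injective (fun i : nat => (i%:R : C)).
Proof. by move=> i j /eqP; rewrite eqr_nat => /eqP. Qed.

Lemma points m n (L : 'M[C]_m) : exists x : nat -> C,
  injective x /\ forall j, (j < n)%N -> (L + (x j)%:M) \in unitmx.
Proof.
set p := char_poly (- L).
set cand := [seq (i%:R : C) | i <- iota 0 (m + n)].
set good := [seq t <- cand | ~~ root p t].
have ucand : uniq cand by rewrite map_inj_uniq ?iota_uniq //; apply: natC_inj.
have sgood : (n <= size good)%N.
  have h1 := count_predC (root p) cand.
  have h2 : (count (root p) cand < m.+1)%N.
    rewrite -size_filter -(size_char_poly (- L)); apply: max_poly_roots.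
    - by rewrite -size_poly_eq0 size_char_poly.
    - by apply/allP => t; rewrite mem_filter => /andP [].
    - by rewrite filter_uniq.
  rewrite size_filter; move: h1 h2; rewrite size_map size_iota.
  have -> : count (predC (root p)) cand = count (fun t => ~~ root p t) cand by [].
  lia.
have ingood : forall j, (j < size good)%N -> exists2 i, (i < m + n)%N & nth 0 good j = i%:R.
  move=> j hj; have : nth 0 good j \in cand.
    by have := mem_nth 0 hj; rewrite mem_filter => /andP [].
  by case/mapP => i; rewrite mem_iota => /andP [_ hi] ->; exists i.
exists (fun j => if (j < size good)%N then nth 0 good j else (m + n + j)%:R); split.
  move=> j1 j2 /=; case: ifP => h1; case: ifP => h2.
  - by move/eqP; rewrite nth_uniq ?filter_uniq // => /eqP.
  - have [i hi ->] := ingood j1 h1 => /natC_inj E; lia.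
  - have [i hi ->] := ingood j2 h2 => /natC_inj E; lia.
  - by move/natC_inj; lia.
move=> j hj /=; have hjg : (j < size good)%N by apply: leq_trans hj sgood.
rewrite hjg; apply: char_unit.
by have := mem_nth 0 hjg; rewrite mem_filter => /andP [].
Qed.

Lemma size_glr_poly m (Mp : 'M[{poly C}]_m) (w : word m) :
  (forall i j, (size (Mp i j) <= 2)%N) -> forall a : word m -> {poly C},
  (forall v, (size (a v) <= 1)%N) -> (size (glr Mp a w) <= (size w).+1)%N.
Proof.
move=> HM; elim: w => [|x w IH] a Ha //=.
apply: (leq_trans (size_sum _ _ _)); apply/bigmax_leqP => j _.
apply: (leq_trans (size_mul_leq _ _)).
have h1 := HM x j; have h2 := IH (fun v => a (j :: v)) (fun v => Ha _).
rewrite -subn1; apply: leq_trans (leq_sub2r 1 (leq_add h1 h2)) _; by rewrite add2n subn1.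
Qed.

Lemma density m nu (U : series m -> Prop) :
  is_subspace U -> psubset U (@fdeg m nu) -> gl_invariant U ->
  forall (L : 'M[C]_m) u, U u -> U (gl_act L u).
Proof.
move=> hU hUd hinv L u hu.
have [x [xinj xunit]] := points nu.+1 L.
set Mp := map_mx polyC L + 'X%:M.
set P := fun w => glr Mp (fun v => (u v)%:P) w.
have Peval : forall t w, (P w).[t] = glr (L + t%:M) u w.
  move=> t w; rewrite /P.
  change ((glr Mp (fun v => (u v)%:P) w).[t]) with (horner_eval t (glr Mp (fun v => (u v)%:P) w)).
  rewrite glr_morph.
  have -> : map_mx (horner_eval t) Mp = L + t%:M.
    apply/matrixP => i j; rewrite !mxE /horner_eval !hornerE hornerMn hornerX.
    done.
  by apply: glr_ext => v; apply: hornerC.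
have Psize : forall w, (size (P w) <= nu.+1)%N.
  move=> w; case: (size w =P nu) => h.
    rewrite -h; apply: size_glr_poly => [i j|v]; last exact: size_polyC_leq1.
    rewrite /Mp !mxE; apply: (leq_trans (size_polyD _ _)); rewrite geq_max.
    rewrite (leq_trans (size_polyC_leq1 _)) //=.
    by case: (i == j); rewrite ?mulr1n ?mulr0n ?size_polyX ?size_poly0.
  rewrite /P glr_vanish ?size_poly0 // => v hv.
  have [_ Hh] := hUd u hu; rewrite Hh ?hv; [by [] | by apply/eqP].
have E : gl_act L u = \big[@sadd m/@szero m]_(i < nu.+1)
    sscale ((tnth ((nu.+1).-lagrange x) i : {poly C}).[0]) (gl_act (L + (x i)%:M) u).
  apply: functional_extensionality => w; rewrite bigsE gl_actE.
  have -> : glr L u w = (P w).[0].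
    rewrite Peval; congr glr; apply/matrixP => i j; rewrite !mxE mul0rn addr0.
    done.
  rewrite [in LHS](lagrange_gen (ltn0Sn nu) xinj (Psize w)) horner_sum.
  apply: eq_bigr => i _; rewrite hornerM hornerC /sscale gl_actE -Peval mulrC.
  done.
rewrite E; apply: sub_big => // i _.
case: hU => _ _ hS; apply: hS; apply: hinv => //; exact: xunit.
Qed.

Section Sub.
Variable m : nat.
Implicit Types (a b : series m) (U V : series m -> Prop).

Lemma sub0 U : is_subspace U -> U (@szero m).
Proof. by case. Qed.
Lemma subD U a b : is_subspace U -> U a -> U b -> U (sadd a b).
Proof. by case=> _ H _; apply: H. Qed.
Lemma subZ U c a : is_subspace U -> U a -> U (sscale c a).
Proof. by case=> _ _ H; apply: H. Qed.
Lemma subB U a b : is_subspace U -> U a -> U b -> U (ssub a b).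
Proof. by move=> hU ha hb; rewrite ssubE; apply: subD => //; apply: subZ. Qed.

Lemma subI U V : is_subspace U -> is_subspace V -> is_subspace (fun a => U a /\ V a).
Proof.
move=> hU hV; split; first by split; apply: sub0.
  by move=> a b [] ? ? [] ? ?; split; apply: subD.
by move=> c a [] ? ?; split; apply: subZ.
Qed.

Lemma invI U V : gl_invariant U -> gl_invariant V -> gl_invariant (fun a => U a /\ V a).
Proof. by move=> hU hV g hg a [] ? ?; split; [apply: hU | apply: hV]. Qed.

Lemma gl0 (g : 'M[C]_m) : gl_act g (@szero m) = @szero m.
Proof. by rewrite gl_act_glr glr0. Qed.
Lemma glD (g : 'M[C]_m) a b : gl_act g (sadd a b) = sadd (gl_act g a) (gl_act g b).
Proof. by rewrite !gl_act_glr; apply: functional_extensionality => w; rewrite glr_add. Qed.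
Lemma glZ (g : 'M[C]_m) c a : gl_act g (sscale c a) = sscale c (gl_act g a).
Proof. by rewrite !gl_act_glr; apply: functional_extensionality => w; rewrite glr_scale. Qed.
Lemma glB (g : 'M[C]_m) a b : gl_act g (ssub a b) = ssub (gl_act g a) (gl_act g b).
Proof. by rewrite !ssubE glD glZ. Qed.
Lemma glbig (g : 'M[C]_m) k (F : 'I_k -> series m) :
  gl_act g (\big[@sadd m/@szero m]_(i < k) F i) = \big[@sadd m/@szero m]_(i < k) gl_act g (F i).
Proof.
rewrite gl_act_glr; apply: functional_extensionality => w.
by rewrite glr_big bigsE; apply: eq_bigr => i _; rewrite gl_act_glr.
Qed.

Lemma irr_dich W U : gl_irreducible W -> is_subspace U -> gl_invariant U ->
  psubset U W -> (exists2 a, U a & a <> @szero m) -> psubset W U.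
Proof.
case=> _ _ _ H hU hinv hUW [a ha hna].
by case: (H U hU hinv hUW) => // h; case: hna; apply: h.
Qed.

Lemma ssub_eq0 a b : ssub a b = @szero m -> a = b.
Proof.
move=> E; apply: functional_extensionality => w.
have := congr1 (fun f => f w) E; rewrite /ssub /szero => /eqP.
by rewrite subr_eq0 => /eqP.
Qed.

Lemma ssubxx a : ssub a a = @szero m.
Proof. by apply: functional_extensionality => w; rewrite /ssub subrr. Qed.

End Sub.

Section Schur.
Variables (m k : nat) (W : 'I_k -> series m -> Prop).
Hypothesis hirr : forall i, gl_irreducible (W i).
Hypothesis huniq : forall ws : 'I_k -> series m, (forall i, W i (ws i)) ->
  \big[@sadd m/@szero m]_(i < k) ws i = @szero m -> forall i, ws i = @szero m.
Hypothesis hniso : forall i j, i != j -> ~ gl_isomorphic (W i) (W j).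

Lemma Wsub i : is_subspace (W i). Proof. by case: (hirr i). Qed.
Lemma Winv i : gl_invariant (W i). Proof. by case: (hirr i). Qed.

Definition dec (t : series m) (ws : 'I_k -> series m) :=
  (forall i, W i (ws i)) /\ t = \big[@sadd m/@szero m]_(i < k) ws i.

Lemma dec_uniq t ws vs : dec t ws -> dec t vs -> forall i, ws i = vs i.
Proof.
move=> [hw ew] [hv ev] i; apply: ssub_eq0.
apply: (huniq (ws := fun i => ssub (ws i) (vs i))) => [l|].
  by apply: subB; [apply: Wsub | apply: hw | apply: hv].
apply: functional_extensionality => w; rewrite bigsE /ssub sumrB -!bigsE -ew -ev.
by rewrite subrr.
Qed.

Lemma dec_add a b ws vs : dec a ws -> dec b vs ->
  dec (sadd a b) (fun i => sadd (ws i) (vs i)).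
Proof.
move=> [hw ew] [hv ev]; split=> [i|]; first by apply: subD; [apply: Wsub|apply: hw|apply: hv].
by rewrite ew ev big_split.
Qed.

Lemma dec_scale c a ws : dec a ws -> dec (sscale c a) (fun i => sscale c (ws i)).
Proof.
move=> [hw ew]; split=> [i|]; first by apply: subZ; [apply: Wsub|apply: hw].
apply: functional_extensionality => w; rewrite ew /sscale !bigsE mulr_sumr.
done.
Qed.

Lemma dec_gl (g : 'M[C]_m) a ws : g \in unitmx -> dec a ws ->
  dec (gl_act g a) (fun i => gl_act g (ws i)).
Proof.
move=> hg [hw ew]; split=> [i|]; first by apply: Winv.
by rewrite ew glbig.
Qed.

Lemma dec_zero : dec (@szero m) (fun _ => @szero m).
Proof. split=> [i|]; [apply: sub0; apply: Wsub | by rewrite big1]. Qed.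

Variable S : series m -> Prop.
Hypothesis hS : is_subspace S.
Hypothesis hSinv : gl_invariant S.

Lemma schur_claim n : forall J : {set 'I_k}, (#|J| <= n)%N ->
  forall ws, (forall i, W i (ws i)) -> (forall i, i \notin J -> ws i = @szero m) ->
  S (\big[@sadd m/@szero m]_(i < k) ws i) -> forall i, S (ws i).
Proof.
elim: n => [|n IH] J hJ ws hws hz hSs.
  move=> i; rewrite hz; first exact: sub0.
  by move: hJ; rewrite leqn0 cards_eq0 => /eqP ->; rewrite in_set0.
apply: NNPP => /not_all_ex_not [i hi].
have hiJ : i \in J.
  by case: (boolP (i \in J)) => // /hz E; exfalso; apply: hi; rewrite E; apply: sub0.
have [j [hji hj]] : exists j, j != i /\ ~ S (ws j).
  apply: NNPP => H; apply: hi.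
  have H' : forall j, j != i -> S (ws j).
    by move=> j hj; apply: NNPP => hn; apply: H; exists j.
  have -> : ws i = ssub (\big[@sadd m/@szero m]_(l < k) ws l)
                        (\big[@sadd m/@szero m]_(l < k | l != i) ws l).
    apply: functional_extensionality => w; rewrite /ssub !bigsE (bigD1 i) //=.
    by rewrite addrK.
  by apply: subB => //; apply: sub_big.
have hSWj : forall y, S y -> W j y -> y = @szero m.
  move=> y hy hwy; apply: NNPP => hny; apply: hj.
  have := @irr_dich _ (W j) (fun a => S a /\ W j a) (hirr j) (subI hS (@Wsub j))
    (invI hSinv (@Winv j)) (fun a h => proj2 h) (ex_intro2 _ _ y (conj hy hwy) hny).
  by move=> /(_ (ws j) (hws j)) [].
pose good (s : series m) (vs : 'I_k -> series m) :=
  [/\ S s, dec s vs & forall l, l \notin J -> vs l = @szero m].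
have WD : forall s vs s' vs', good s vs -> good s' vs' -> vs i = vs' i -> vs j = vs' j.
  move=> s vs s' vs' [hs hd hz1] [hs' hd' hz1'] eqi.
  have hdd := dec_add hd (dec_scale (-1) hd').
  have H1 : (#|J :\ i| <= n)%N by move: hJ; rewrite (cardsD1 i J) hiJ.
  have H2 : forall l, l \notin J :\ i ->
      (fun l => sadd (vs l) (sscale (-1) (vs' l))) l = @szero m.
    move=> l; rewrite in_setD1 negb_and negbK => /orP [/eqP ->|hl] /=.
      rewrite eqi; apply: functional_extensionality => w.
      by rewrite /sadd /sscale /szero mulN1r subrr.
    rewrite hz1 // hz1' //; apply: functional_extensionality => w.
    by rewrite /sadd /sscale /szero mulr0 addr0.
  have H3 : S (\big[@sadd m/@szero m]_(l < k) (fun l => sadd (vs l) (sscale (-1) (vs' l))) l).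
    by rewrite -(proj2 hdd); apply: subD => //; apply: subZ.
  have hS2 := IH _ H1 _ (proj1 hdd) H2 H3 j.
  have := hSWj _ hS2 (proj1 hdd j).
  by rewrite -ssubE => /ssub_eq0.
have z2 : sadd (@szero m) (@szero m) = @szero m by rewrite add0s.
have zc : forall c, sscale c (@szero m) = @szero m.
  by move=> c; apply: functional_extensionality => w; rewrite /sscale /szero mulr0.
have good_add : forall s vs s' vs', good s vs -> good s' vs' ->
    good (sadd s s') (fun l => sadd (vs l) (vs' l)).
  move=> s vs s' vs' [h1 h2 h3] [h1' h2' h3']; split.
  - exact: subD.
  - exact: dec_add.
  - by move=> l hl; rewrite h3 // h3'.
have good_scale : forall c s vs, good s vs -> good (sscale c s) (fun l => sscale c (vs l)).
  move=> c s vs [h1 h2 h3]; split.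
  - exact: subZ.
  - exact: dec_scale.
  - by move=> l hl; rewrite h3.
have good_gl : forall g s vs, g \in unitmx -> good s vs ->
    good (gl_act g s) (fun l => gl_act g (vs l)).
  move=> g s vs hg [h1 h2 h3]; split.
  - exact: hSinv.
  - exact: dec_gl.
  - by move=> l hl; rewrite h3 // gl0.
have good_zero : good (@szero m) (fun _ => @szero m).
  split; [exact: sub0 | exact: dec_zero | by []].
have good_ws : good (\big[@sadd m/@szero m]_(l < k) ws l) ws by split.
pose psi x := epsilon (inhabits (@szero m))
  (fun y => exists s vs, [/\ good s vs, vs i = x & vs j = y]).
have psi_eq : forall s vs, good s vs -> psi (vs i) = vs j.
  move=> s vs hg.
  have ex : exists y, exists s' vs', [/\ good s' vs', vs' i = vs i & vs' j = y].
    by exists (vs j), s, vs.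
  have [s' [vs' [hg' e1 e2]]] := epsilon_spec (inhabits (@szero m)) _ ex.
  by rewrite /psi -e2; apply: (WD _ _ _ _ hg' hg).
have wsi0 : ws i <> @szero m by move=> E; apply: hi; rewrite E; apply: sub0.
have wsj0 : ws j <> @szero m by move=> E; apply: hj; rewrite E; apply: sub0.
have reach : forall x, W i x -> exists s vs, good s vs /\ vs i = x.
  have := @irr_dich _ (W i) (fun x => exists s vs, good s vs /\ vs i = x) (hirr i).
  apply.
  - split.
    + by exists (@szero m), (fun _ => @szero m).
    + move=> a b [s [vs [h1 <-]]] [s' [vs' [h1' <-]]].
      by exists (sadd s s'), (fun l => sadd (vs l) (vs' l)); split => //; apply: good_add.
    + move=> c a [s [vs [h1 <-]]].
      by exists (sscale c s), (fun l => sscale c (vs l)); split => //; apply: good_scale.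
  - move=> g hg a [s [vs [h1 <-]]].
    by exists (gl_act g s), (fun l => gl_act g (vs l)); split => //; apply: good_gl.
  - by move=> a [s [vs [[_ [hd _] _] <-]]].
  - by exists (ws i) => //; exists (\big[@sadd m/@szero m]_(l < k) ws l), ws.
have psi_W : forall x, W i x -> W j (psi x).
  by move=> x /reach [s [vs [hg <-]]]; rewrite (psi_eq _ _ hg); case: hg => _ [hd _] _.
have psi_add : forall x y, W i x -> W i y -> psi (sadd x y) = sadd (psi x) (psi y).
  move=> x y /reach [s [vs [hg <-]]] /reach [s' [vs' [hg' <-]]].
  by rewrite (psi_eq _ _ hg) (psi_eq _ _ hg') (psi_eq _ _ (good_add _ _ _ _ hg hg')).
have psi_scale : forall c x, W i x -> psi (sscale c x) = sscale c (psi x).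
  move=> c x /reach [s [vs [hg <-]]].
  by rewrite (psi_eq _ _ hg) (psi_eq _ _ (good_scale c _ _ hg)).
have psi_gl : forall g x, g \in unitmx -> W i x -> psi (gl_act g x) = gl_act g (psi x).
  move=> g x hgu /reach [s [vs [hg <-]]].
  by rewrite (psi_eq _ _ hg) (psi_eq _ _ (good_gl g _ _ hgu hg)).
have psi0 : psi (@szero m) = @szero m by apply: (psi_eq _ _ good_zero).
have psi_ws : psi (ws i) = ws j by apply: (psi_eq _ _ good_ws).
have hWi := @Wsub i; have hWj := @Wsub j.
have Kzero : forall x, W i x -> psi x = @szero m -> x = @szero m.
  move=> x hx hpx; apply: NNPP => hnx.
  have hK : psubset (W i) (fun x => W i x /\ psi x = @szero m).
    apply: (irr_dich (hirr i)).
    - split.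
      + by split; [apply: sub0 | apply: psi0].
      + by move=> a b [ha pa] [hb pb]; split; [apply: subD | rewrite psi_add // pa pb].
      + by move=> c a [ha pa]; split; [apply: subZ | rewrite psi_scale // pa].
    - move=> g hg a [ha pa]; split; first by apply: Winv.
      by rewrite psi_gl // pa gl0.
    - by move=> a [].
    - by exists x.
  by apply: wsj0; rewrite -psi_ws; case: (hK _ (hws i)).
have hI : psubset (W j) (fun y => exists2 x, W i x & psi x = y).
  apply: (irr_dich (hirr j)).
  - split.
    + by exists (@szero m); [apply: sub0 | apply: psi0].
    + move=> a b [x hx <-] [y hy <-]; exists (sadd x y); first exact: subD.
      by rewrite psi_add.
    + move=> c a [x hx <-]; exists (sscale c x); first exact: subZ.
      by rewrite psi_scale.
  - move=> g hg a [x hx <-]; exists (gl_act g x); first exact: Winv.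
    by rewrite psi_gl.
  - by move=> a [x hx <-]; apply: psi_W.
  - by exists (ws j) => //; exists (ws i).
apply: (hniso (i := i) (j := j)); first by rewrite eq_sym.
exists psi; split.
- exact: psi_W.
- exact: psi_add.
- exact: psi_scale.
- split.
    move=> x y hx hy hxy; apply: ssub_eq0; apply: Kzero; first exact: subB.
    rewrite ssubE psi_add ?psi_scale -?ssubE ?hxy ?ssubxx //; exact: subZ.
  by move=> b /hI.
- by move=> g hg a ha; apply: psi_gl.
Qed.

Lemma schur ws : (forall i, W i (ws i)) ->
  S (\big[@sadd m/@szero m]_(i < k) ws i) -> forall i, S (ws i).
Proof.
move=> hws hs; apply: (@schur_claim k [set: 'I_k]) => //.
  by rewrite cardsT card_ord.
by move=> i; rewrite in_setT.
Qed.




End Schur.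

Section Fin.
Variable m : nat.
Implicit Types (a b : series m) (h U : series m -> Prop).

Lemma ideal_sub h : is_ideal h -> is_subspace h.
Proof. by case. Qed.
Lemma ideal_fl h a : is_ideal h -> h a -> free_lie a.
Proof. by case=> _ H _; apply: H. Qed.

Lemma verbal_gl h (g : 'M[C]_m) a : verbal h -> h a -> h (gl_act g a).
Proof. by case=> _ H ha; apply: H => //; apply: lie_endo_gl. Qed.

Lemma verbal_inv h : verbal h -> gl_invariant h.
Proof. by move=> hv g _ a ha; apply: verbal_gl. Qed.

Lemma gl_fl (g : 'M[C]_m) a : free_lie a -> free_lie (gl_act g a).
Proof. by rewrite gl_act_glr; apply: fl_glr. Qed.

Lemma fdeg_sub nu : is_subspace (@fdeg m nu).
Proof.
split.
- by split; [apply: fl_zero | by []].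
- move=> a b [fa ha] [fb hb]; split; first exact: fl_add.
  by move=> w hw; rewrite /sadd ha ?hb ?addr0.
- move=> c a [fa ha]; split; first exact: fl_scale.
  by move=> w hw; rewrite /sscale ha ?mulr0.
Qed.

Lemma fdeg_inv nu : gl_invariant (@fdeg m nu).
Proof.
move=> g _ a [fa ha]; split; first exact: gl_fl.
by rewrite gl_act_glr; apply: (homog_glr g ha).
Qed.

Lemma ftrunc_sub nu : is_subspace (@ftrunc m nu).
Proof.
split.
- by split; [apply: fl_zero | by []].
- move=> a b [fa ha] [fb hb]; split; first exact: fl_add.
  by move=> w hw; rewrite /sadd ha ?hb ?addr0.
- move=> c a [fa ha]; split; first exact: fl_scale.
  by move=> w hw; rewrite /sscale ha ?mulr0.
Qed.

Lemma ftrunc_inv nu : gl_invariant (@ftrunc m nu).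
Proof.
move=> g _ a [fa ha]; split; first exact: gl_fl.
move=> w hw; rewrite gl_act_glr; apply: glr_vanish => v hv; apply: ha; by rewrite hv.
Qed.

Lemma trunc_val nu a w :
  (\big[@sadd m/@szero m]_(n < nu.+1) scomp n a) w = if (size w < nu.+1)%N then a w else 0.
Proof. by rewrite bigsE /scomp sum_ord_eqc. Qed.

End Fin.

Lemma In_map_enum (T : finType) (U : Type) (f : T -> U) (x : T) :
  List.In (f x) [seq f y | y <- enum T].
Proof.
have : x \in enum T by rewrite mem_enum.
elim: (enum T) => //= y s IH; rewrite in_cons => /orP [/eqP ->|hx]; first by left.
by right; apply: IH.
Qed.

Unset Implicit Arguments.
Theorem proposition2p9 (m nu : nat) (hnu : (1 <= nu)%N) :
  [/\
   (* (1) *)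
   forall h : series m -> Prop, verbal h -> psubset (@fge m nu.+1) h ->
     forall g : 'M[C]_m, g \in unitmx -> forall a, h a ->
       (exists2 b, h b & fge nu.+1 (ssub (gl_act g a) b)),
   (* (2) *)
   multiplicity_free (@ftrunc m nu) ->
     exists hs : seq (series m -> Prop),
       forall h : series m -> Prop, verbal h -> psubset (@fge m nu.+1) h ->
         exists2 h', List.In h' hs & forall a, h a <-> h' a
  & (* (3) *)
   forall h : series m -> Prop,
     (verbal h /\ psubset (@fge m nu.+1) h /\ psubset h (@fge m nu)) <->
     (is_ideal h /\
      exists U : series m -> Prop,
        [/\ is_subspace U, psubset U (@fdeg m nu), gl_invariant U
          & forall a, h a <-> exists u, exists2 b, U u /\ fge nu.+1 b & a = sadd u b])].
Proof.
split.
-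
  move=> h hv hge g hg a ha; exists (gl_act g a); first exact: verbal_gl.
  by rewrite ssubxx; split; [apply: fl_zero | by []].
-
  move=> [k [W [hWM hdec huniq hniso]]].
  have hirr : forall i, gl_irreducible (W i) by move=> i; case: (hWM i).
  pose hJ (J : {set 'I_k}) := fun a => exists ws : 'I_k -> series m,
    [/\ forall i, W i (ws i), forall i, i \notin J -> ws i = @szero m
      & fge nu.+1 (ssub a (\big[@sadd m/@szero m]_(i < k) ws i))].
  exists [seq hJ J | J <- enum {set 'I_k}].
  move=> h [hid hv] hge.
  pose J := [set i | if excluded_middle_informative (psubset (W i) h) then true else false].
  have HJ : forall i, i \in J <-> psubset (W i) h.
    move=> i; rewrite inE; case: excluded_middle_informative => //.
  exists (hJ J); first exact: In_map_enum.
  have hsub := ideal_sub hid.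
  move=> a; split.
  + move=> ha; have fa := ideal_fl hid ha.
    pose t := \big[@sadd m/@szero m]_(n < nu.+1) scomp n a.
    have ft : ftrunc nu t.
      split; first by apply: fl_big => n _; apply: fl_comp.
      by move=> w hw; rewrite /t trunc_val ltnS leqNgt hw.
    have hb : fge nu.+1 (ssub a t).
      split; first by apply: fl_sub => //; case: ft.
      by move=> w hw; rewrite /ssub /t trunc_val hw subrr.
    have ht : h t.
      have -> : t = ssub a (ssub a t).
        by apply: functional_extensionality => w; rewrite /ssub opprB addrC subrK.
      by apply: subB => //; apply: hge.
    have [ws hws et] := hdec t ft.
    have hS := @schur m k W hirr hniso (fun x => h x /\ ftrunc nu x)
       (subI hsub (ftrunc_sub m nu)) (invI (verbal_inv (conj hid hv)) (@ftrunc_inv m nu))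
       ws hws.
    have hwsh : forall i, h (ws i) by move=> i; case: (hS _ i) => //; rewrite -et.
    exists ws; split => //; last by rewrite -et.
    move=> i /negP hi; apply: NNPP => hn; apply: hi; apply/HJ.
    have H := @irr_dich m (W i) (fun x => W i x /\ h x) (hirr i)
      (subI (Wsub hirr i) hsub) (invI (@Winv _ _ _ hirr i) (verbal_inv (conj hid hv)))
      (fun x H => proj1 H) (ex_intro2 _ _ (ws i) (conj (hws i) (hwsh i)) hn).
    by move=> x /H [].
  + move=> [ws [hws hz hf]].
    have hall : forall i, h (ws i).
      move=> i; case: (boolP (i \in J)) => [/HJ H|/hz ->]; last exact: sub0.
      by apply: H.
    have -> : a = sadd (ssub a (\big[@sadd m/@szero m]_(i < k) ws i))
                      (\big[@sadd m/@szero m]_(i < k) ws i).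
      by apply: functional_extensionality => w; rewrite /sadd /ssub subrK.
    by apply: subD => //; [apply: hge | apply: sub_big].
-
  move=> h; split.
  + move=> [[hid hv] [hge hle]]; split => //.
    exists (fun a => h a /\ fdeg nu a); split.
    * exact: subI (ideal_sub hid) (fdeg_sub m nu).
    * by move=> a [].
    * exact: invI (verbal_inv (conj hid hv)) (@fdeg_inv m nu).
    * move=> a; split.
        move=> ha; have [fa la] := hle a ha.
        exists (scomp nu a), (ssub a (scomp nu a)); last first.
          by apply: functional_extensionality => w; rewrite /sadd /ssub addrC subrK.
        have hb : fge nu.+1 (ssub a (scomp nu a)).
          split; first by apply: fl_sub => //; apply: fl_comp.
          move=> w hw; rewrite /ssub /scomp; case: eqP => [_|hn]; first by rewrite subrr.
          by rewrite la ?subr0 //; rewrite ltnS leq_eqVlt in hw; case/orP: hw => // /eqP.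
        split => //; split; last by split; [apply: fl_comp | apply: homog_comp].
        have -> : scomp nu a = ssub a (ssub a (scomp nu a)).
          by apply: functional_extensionality => w; rewrite /ssub opprB addrC subrK.
        by apply: subB => //; [apply: ideal_sub | apply: hge].
      move=> [u [b [[hu _] hb] ->]]; apply: subD => //; first exact: ideal_sub.
      exact: hge.
  + move=> [hid [U [hU hUd hUinv hE]]].
    split; last split.
    * split => // phi hphi a /hE [u [b [hu hb] ->]].
      have [fu du] := hUd u hu; have [fb lb] := hb.
      apply/hE; exists (gl_act (Lmat phi) u).
      exists (sadd (ssub (phi u) (gl_act (Lmat phi) u)) (phi b)).
        split; first exact: (density hU hUd hUinv).
        split.
          apply: fl_add; last exact: le_fl.
          by apply: fl_sub; [apply: le_fl | apply: gl_fl].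
        move=> w hw; rewrite /sadd (phi_low hphi fb lb) // addr0 gl_act_glr.
        exact: (Hlemma hphi fu du).
      rewrite le_add //; apply: functional_extensionality => w.
      by rewrite /sadd /ssub addrA addrC [_ + (_ - _)]addrC subrK addrC.
    * move=> a ha; apply/hE; exists (@szero m), a; last by rewrite add0s.
      by split => //; apply: sub0.
    * move=> a /hE [u [b [hu [fb lb]] ->]]; have [fu du] := hUd u hu.
      split; first exact: fl_add.
      move=> w hw; rewrite /sadd lb ?du ?addr0 //; last exact: ltnW.
      by rewrite neq_ltn hw.
Qed.
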